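(* Let $\Phi \in \mathbb{R}^{M \times N}$, let $\Lambda \subset \{1, 2, \dots, N\}$, and let $\widetilde{x} \in \mathbb{R}^N$ with $\mathrm{supp}(\widetilde{x}) \cap \Lambda = \emptyset$. Suppose $\Phi$ satisfies the restricted isometry property of order $\|\widetilde{x}\|_0 + |\Lambda| + 1$ with isometry constant $\delta$, and define $h = A_\Lambda^T A_\Lambda \widetilde{x}$. If $$\|\widetilde{x}\|_\infty > \frac{2\delta}{1-\delta}\|\widetilde{x}\|_2,$$ then $\arg\max_j |h(j)| \in \mathrm{supp}(\widetilde{x})$, i.e. every index $j$ maximizing $|h(j)|$ belongs to $\mathrm{supp}(\widetilde{x})$.
   Context: For $x \in \mathbb{R}^N$, $\|x\|_0 := |\mathrm{supp}(x)|$. A matrix $\Phi \in \mathbb{R}^{M\times N}$ satisfies the restricted isometry property (RIP) of order $K$ with isometry constant $\delta \in (0,1)$ if $(1-\delta)\|x\|_2^2 \le \|\Phi x\|_2^2 \le (1+\delta)\|x\|_2^2$ for all $x \in \mathbb{R}^N$ with $\|x\|_0 \le K$. For $\Lambda \subset \{1,\dots,N\}$, $\Phi_\Lambda$ is the submatrix of $\Phi$ consisting of the columns indexed by $\Lambda$, $P_\Lambda$ is the orthogonal projection onto the column space of $\Phi_\Lambda$, $P_\Lambda^\perp = I - P_\Lambda$, and $A_\Lambda := P_\Lambda^\perp \Phi$. *)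

(* Defs.v *)
From HB Require Import structures.
From mathcomp Require Import all_boot all_order all_algebra.
Set Implicit Arguments. Unset Strict Implicit. Unset Printing Implicit Defensive.
Import Order.TTheory GRing.Theory Num.Theory.
Local Open Scope ring_scope.

Section Defs.
Variable R : rcfType.

Definition supp N (x : 'cV[R]_N) : {set 'I_N} := [set i | x i 0 != 0].

Definition sqnorm2 n (v : 'cV[R]_n) : R := \sum_(i < n) (v i 0) ^+ 2.
Definition norm2 n (v : 'cV[R]_n) : R := Num.sqrt (sqnorm2 v).
Definition norminf n (v : 'cV[R]_n) : R := \big[Num.max/0]_(i < n) `|v i 0|.

Definition RIP M N (Phi : 'M[R]_(M, N)) (K : nat) (delta : R) : Prop :=
  0 < delta < 1 /\
  forall x : 'cV[R]_N, (#|supp x| <= K)%N ->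
    (1 - delta) * sqnorm2 x <= sqnorm2 (Phi *m x) /\
    sqnorm2 (Phi *m x) <= (1 + delta) * sqnorm2 x.

(* Phi_Lambda: the columns indexed by Lambda (other columns zeroed out;
   this has the same column space as the genuine submatrix) *)
Definition colrestr M N (Phi : 'M[R]_(M, N)) (L : {set 'I_N}) : 'M[R]_(M, N) :=
  \matrix_(i, j) (if j \in L then Phi i j else 0).

Definition is_orth_proj M N (P : 'M[R]_M) (B : 'M[R]_(M, N)) : Prop :=
  forall y : 'cV[R]_M,
    ((P *m y)^T <= B^T)%MS /\ B^T *m (y - P *m y) = 0.

(* A_Lambda = P_Lambda^perp Phi, for P = P_Lambda *)
Definition A_of M N (P : 'M[R]_M) (Phi : 'M[R]_(M, N)) : 'M[R]_(M, N) :=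
  (1%:M - P) *m Phi.
End Defs.

(* Main.v *)
Require Import Defs.
From HB Require Import structures.
From mathcomp Require Import all_boot all_order all_algebra.
From mathcomp Require Import ring lra zify.
Import Order.TTheory GRing.Theory Num.Theory.
Local Open Scope ring_scope.

Set Implicit Arguments. Unset Strict Implicit.
Section Aux.
Variable R : rcfType.

Definition ip n (u v : 'cV[R]_n) : R := \sum_(i < n) u i 0 * v i 0.

Lemma ipC n (u v : 'cV[R]_n) : ip u v = ip v u.
Proof. by apply: eq_bigr => i _; rewrite mulrC. Qed.

Lemma ip_mul m n (Mx : 'M[R]_(m,n)) u v : ip (Mx *m u) v = ip u (Mx^T *m v).
Proof.
rewrite /ip.
under eq_bigr do rewrite mxE big_distrl /=.
rewrite exchange_big /=; apply: eq_bigr => k _.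
rewrite mxE big_distrr /=; apply: eq_bigr => i _; rewrite !mxE; ring.
Qed.

Lemma sqD n (u v : 'cV[R]_n) t :
  sqnorm2 (u + t *: v) = sqnorm2 u + 2 * t * ip u v + t ^+ 2 * sqnorm2 v.
Proof.
rewrite /sqnorm2 /ip !mulr_sumr -!big_split /=.
by apply: eq_bigr => i _; rewrite !mxE; ring.
Qed.

Lemma ip_delta n (v : 'cV[R]_n) k : ip (delta_mx k 0) v = v k 0.
Proof.
rewrite /ip (bigD1 k) //= big1 ?addr0; first by rewrite mxE !eqxx mul1r.
by move=> i ik; rewrite mxE (negbTE ik) mul0r.
Qed.

Lemma sq_delta n (k : 'I_n) : sqnorm2 (delta_mx k 0 : 'cV[R]_n) = 1.
Proof.
have -> : sqnorm2 (delta_mx k 0 : 'cV[R]_n) = ip (delta_mx k 0) (delta_mx k 0).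
  by apply: eq_bigr => i _; rewrite expr2.
by rewrite ip_delta mxE !eqxx.
Qed.

Lemma sq_ge0 n (v : 'cV[R]_n) : 0 <= sqnorm2 v.
Proof. by apply: sumr_ge0 => i _; apply: sqr_ge0. Qed.

Lemma sq_eq0 n (v : 'cV[R]_n) : sqnorm2 v = 0 -> v = 0.
Proof.
move=> H; apply/matrixP => i j; rewrite (ord1 j) mxE.
have := @psumr_eq0P _ _ predT (fun i => v i 0 ^+ 2) (fun i _ => sqr_ge0 (v i 0)) H i isT.
by move/eqP; rewrite sqrf_eq0 => /eqP.
Qed.

Lemma ip0r n (u : 'cV[R]_n) : ip u 0 = 0.
Proof. by rewrite /ip big1 // => i _; rewrite mxE mulr0. Qed.

Lemma ip0l n (u : 'cV[R]_n) : ip 0 u = 0.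
Proof. by rewrite ipC ip0r. Qed.

Lemma norminf_ex n (v : 'cV[R]_n) b : 0 <= b -> b < norminf v ->
  exists i, b < `|v i 0|.
Proof.
move=> b0 Hb; case: (boolP [exists i, b < `|v i 0|]) => [/existsP[i Hi]|H].
  by exists i.
exfalso; move: Hb; apply/negP; rewrite -leNgt /norminf.
apply: (big_ind (fun y => y <= b)) => //.
  by move=> x y Hx Hy; rewrite ge_max Hx Hy.
by move/existsPn: H => H i _; rewrite leNgt H.
Qed.

Lemma sq_ge_term n (v : 'cV[R]_n) i : v i 0 ^+ 2 <= sqnorm2 v.
Proof.
rewrite /sqnorm2 (bigD1 i) //= lerDl; apply: sumr_ge0 => k _; apply: sqr_ge0.
Qed.

End Aux.

Theorem corollary1 (R : rcfType) (M N : nat) (Phi : 'M[R]_(M, N))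
  (Lambda : {set 'I_N}) (xt : 'cV[R]_N) (delta : R)
  (P : 'M[R]_M) :
  supp xt :&: Lambda = set0 ->
  RIP Phi (#|supp xt| + #|Lambda| + 1)%N delta ->
  is_orth_proj P (colrestr Phi Lambda) ->
  let h := (A_of P Phi)^T *m A_of P Phi *m xt in
  norminf xt > (2 * delta) / (1 - delta) * norm2 xt ->
  forall j : 'I_N, (forall k : 'I_N, `|h k 0| <= `|h j 0|) -> j \in supp xt.
Proof.
move=> Hdisj [/andP[d0 d1] Hrip] Hproj h Hinf j Hj.
pose B := colrestr Phi Lambda.
pose A := A_of P Phi.
pose K := (#|supp xt| + #|Lambda| + 1)%N.
have HP y : exists c : 'cV[R]_N, P *m y = B *m c.
  have [Hs _] := Hproj y; move/submxP: Hs => [D HD].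
  by exists D^T; rewrite -[P *m y]trmxK HD trmx_mul trmxK.
have HB y : B^T *m (y - P *m y) = 0 := (Hproj y).2.
have HAz z : A *m z = Phi *m z - P *m (Phi *m z).
  by rewrite /A /A_of -mulmxA mulmxBl mul1mx.
have Hortho y : ip (P *m y) (y - P *m y) = 0.
  by have [c Hc] := HP y; rewrite {1}Hc ip_mul HB ip0r.
have Hup y : sqnorm2 (y - P *m y) <= sqnorm2 y.
  have E : y = (y - P *m y) + 1 *: (P *m y) by rewrite scale1r subrK.
  rewrite [in X in _ <= X]E sqD ipC Hortho mulr0 addr0 expr1n mul1r lerDl.
  exact: sq_ge0.
have Hlow z : supp z :&: Lambda = set0 -> (#|supp z| + #|Lambda| <= K)%N ->
    (1 - delta) * sqnorm2 z <= sqnorm2 (A *m z).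
  move=> Hz Hcard.
  have [c Hc] := HP (Phi *m z).
  pose r := (\col_i (if i \in Lambda then c i 0 else 0)) : 'cV[R]_N.
  have HBr : B *m c = Phi *m r.
    apply/matrixP => i k; rewrite (ord1 k) !mxE; apply: eq_bigr => l _.
    by rewrite !mxE; case: (l \in Lambda); rewrite ?mul0r ?mulr0.
  have HAw : A *m z = Phi *m (z - r) by rewrite HAz Hc HBr mulmxBr.
  have Hsupp : supp (z - r) \subset supp z :|: Lambda.
    apply/subsetP => i; rewrite /supp !inE !mxE.
    by case: (i \in Lambda); rewrite ?orbT ?subr0 ?orbF.
  have Hcw : (#|supp (z - r)| <= K)%N.
    apply: leq_trans (subset_leq_card Hsupp) _.
    by rewrite cardsU Hz cards0 subn0.
  have [Hl _] := Hrip _ Hcw.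
  rewrite HAw; apply: le_trans Hl; apply: ler_wpM2l; first by rewrite subr_ge0 ltW.
  rewrite /sqnorm2; apply: ler_sum => i _; rewrite !mxE.
  case: (boolP (i \in Lambda)) => Hi.
    have : i \notin supp z.
      apply/negP => Hs; have := in_set0 i; by rewrite -Hz inE Hs Hi.
    rewrite /supp inE negbK => /eqP ->.
    by rewrite expr2 mul0r sqr_ge0.
  by rewrite subr0.
have Hupz z : (#|supp z| <= K)%N -> sqnorm2 (A *m z) <= (1 + delta) * sqnorm2 z.
  move=> Hc; rewrite HAz; exact: le_trans (Hup _) ((Hrip _ Hc).2).
have HL k : k \in Lambda -> A *m delta_mx k (0:'I_1) = 0.
  move=> Hk; apply: sq_eq0.
  have Ey : Phi *m delta_mx k (0:'I_1) = B *m delta_mx k (0:'I_1).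
    apply/matrixP => i l; rewrite (ord1 l) !mxE; apply: eq_bigr => m _.
    rewrite !mxE; case: (eqVneq m k) => [->|mk]; first by rewrite Hk.
    by rewrite !mulr0.
  have [c Hc] := HP (Phi *m delta_mx k (0:'I_1)).
  have E2 : Phi *m delta_mx k (0:'I_1) - P *m (Phi *m delta_mx k (0:'I_1))
            = B *m (delta_mx k (0:'I_1) - c) by rewrite mulmxBr -Ey -Hc.
  have -> : sqnorm2 (A *m delta_mx k (0:'I_1)) = ip (A *m delta_mx k (0:'I_1)) (A *m delta_mx k (0:'I_1)).
    by apply: eq_bigr => i _; rewrite expr2.
  by rewrite HAz {1}E2 ip_mul HB ip0r.
have Hh k : h k 0 = ip (A *m delta_mx k (0:'I_1)) (A *m xt).
  by rewrite ip_mul ip_delta mulmxA.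
pose n := norm2 xt.
have n0 : 0 <= n by apply: sqrtr_ge0.
have Hc2 : 2 * delta * n <= (2 * delta) / (1 - delta) * n.
  apply: ler_wpM2r => //; rewrite ler_pdivlMr ?subr_gt0 //; nra.
have [i Hi] := norminf_ex (mulr_ge0 (mulr_ge0 (ler0n _ 2) (ltW d0)) n0)
  (le_lt_trans Hc2 Hinf).
have xi0 : xt i 0 != 0.
  apply/negP => /eqP E; move: Hi; rewrite E normr0; apply/negP; rewrite -leNgt.
  exact: mulr_ge0 (mulr_ge0 (ler0n _ 2) (ltW d0)) n0.
have iS : i \in supp xt by rewrite inE.
have iL : i \notin Lambda.
  apply/negP => HiL; have := in_set0 i; by rewrite -Hdisj inE iS HiL.
have Sn : n ^+ 2 = sqnorm2 xt by rewrite sqr_sqrtr // sq_ge0.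
have npos : 0 < n.
  rewrite /n /norm2 sqrtr_gt0; apply: lt_le_trans (sq_ge_term xt i).
  by rewrite lt_def sqrf_eq0 xi0 sqr_ge0.
have Hpol k : k \notin Lambda -> `|h k 0 - xt k 0| <= delta * n.
  move=> Hk; pose e := (delta_mx k (0:'I_1) : 'cV[R]_N).
  have Hz t : supp (xt + t *: e) :&: Lambda = set0 /\
              (#|supp (xt + t *: e)| + #|Lambda| <= K)%N.
    have Hs : supp (xt + t *: e) \subset supp xt :|: [set k].
      apply/subsetP => l; rewrite /supp !inE !mxE.
      case: (eqVneq l k) => [->|lk]; first by rewrite orbT.
      by rewrite /= mulr0 addr0 orbF.
    split.
      apply/setP => l; rewrite inE in_set0; apply/negP => /andP[Hl HlL].
      have := subsetP Hs l Hl; rewrite in_setU in_set1 => /orP[Hx|/eqP Elk].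
        by have := in_set0 l; rewrite -Hdisj inE Hx HlL.
      by move: Hk; rewrite -Elk HlL.
    have := subset_leq_card Hs; rewrite cardsU cards1 /K; lia.
  have Hq t : - (delta * sqnorm2 (xt + t *: e)) <=
              sqnorm2 (A *m (xt + t *: e)) - sqnorm2 (xt + t *: e) <=
              delta * sqnorm2 (xt + t *: e).
    have [H1 H2] := Hz t.
    have Lo := Hlow _ H1 H2.
    have Up := Hupz _ (leq_trans (leq_addr _ _) H2).
    apply/andP; split; lra.
  have AD t : A *m (xt + t *: e) = A *m xt + t *: (A *m e).
    by rewrite mulmxDr scalemxAr.
  have Hie : ip xt e = xt k 0 by rewrite ipC ip_delta.
  have Hia : ip (A *m xt) (A *m e) = h k 0 by rewrite ipC Hh.
  have := Hq n; have := Hq (- n).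
  rewrite !AD !sqD Hie Hia sq_delta sqrrN -Sn.
  move=> /andP[Ha Hb] /andP[Hc Hd].
  have E1 : n * (h k 0 - xt k 0) <= n * (delta * n) by nra.
  have E2 : n * (- (delta * n)) <= n * (h k 0 - xt k 0) by nra.
  rewrite ler_norml; apply/andP; split.
    by rewrite -(ler_pM2l npos).
  by rewrite -(ler_pM2l npos).
case: (boolP (j \in supp xt)) => // Hjs; exfalso.
have xj0 : xt j 0 = 0 by move: Hjs; rewrite inE negbK => /eqP.
have Hhj : `|h j 0| <= delta * n.
  case: (boolP (j \in Lambda)) => HjL.
    by rewrite Hh HL // ip0l normr0 mulr_ge0 // ltW.
  by have := Hpol j HjL; rewrite xj0 subr0.
have Hhi := Hpol i iL.
have tri : `|xt i 0| <= `|h i 0| + `|h i 0 - xt i 0|.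
  rewrite distrC; have := ler_normD (h i 0) (xt i 0 - h i 0).
  by rewrite addrC subrK.
have := Hj i; lra.
Qed.
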